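(* Let $\lambda\in\Lambda$ (single-hop). For every $q\in\mathbb R_+^N$, $\Delta(q)$ is the unique optimal solution of the problem: minimize $L(r)$ over $r\in\mathbb R_+^N$ subject to $\xi\cdot r\ge\xi\cdot q$ for all $\xi\in\Xi^+(\lambda)$.
   Context: Single-hop network with $N$ queues and finite $\mathcal S\subset\mathbb R_+^N$; $f:\mathbb R_+\to\mathbb R_+$ differentiable, strictly increasing, $f(0)=0$; $L(q)=\sum_n\int_0^{q_n}f$. $\langle\mathcal S\rangle$ convex hull; $\Lambda=\{\lambda\in\mathbb R_+^N:\lambda\le\sigma$ for some $\sigma\in\langle\mathcal S\rangle\}$. $E$ = set of extreme points of $\{\xi\in\mathbb R_+^N:\max_{\pi\in\mathcal S}\xi\cdot\pi\le1\}$; $\mathcal S^*$ = maximal elements of $E$ (componentwise order); $\Xi(\lambda)=\{\xi\in\mathcal S^*:\xi\cdot\lambda=1\}$; $\Xi^+(\lambda)=\{\xi\in E:\xi\cdot\lambda=1\}$. Lifting map: $\Delta(q)$ is the unique minimizer of $L(r)$ over $r\in\mathbb R_+^N$ s.t. $\xi\cdot r\ge\xi\cdot q$ for all $\xi\in\Xi(\lambda)$ and $r_n\le q_n$ for all $n$ with $\lambda_n=0$. *)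

(* Defs.v *)
From Stdlib Require Import Reals Lra List ClassicalEpsilon.
Import ListNotations.
Open Scope R_scope.

(* Vectors of R^N are functions nat -> R; R_+^N = nonnegative on indices < N
   and (by convention) zero on indices >= N, so that equality of vectors is
   Leibniz equality. *)
Definition Rp (N : nat) (x : nat -> R) : Prop :=
  (forall n, (n < N)%nat -> 0 <= x n) /\ (forall n, (N <= n)%nat -> x n = 0).

Definition sumR (l : list R) : R := fold_right Rplus 0 l.

Definition dot (N : nat) (x y : nat -> R) : R :=
  sumR (map (fun n => x n * y n) (seq 0 N)).

Definition in_hull (N : nat) (S : list (nat -> R)) (sigma : nat -> R) : Prop :=
  exists al : list R,
    length al = length S /\ Forall (fun a => 0 <= a) al /\ sumR al = 1 /\
    forall n, (n < N)%nat ->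
      sigma n = sumR (map (fun p => fst p * snd p n) (combine al S)).

Definition in_Lambda (N : nat) (S : list (nat -> R)) (lam : nat -> R) : Prop :=
  Rp N lam /\
  exists sigma, in_hull N S sigma /\ forall n, (n < N)%nat -> lam n <= sigma n.

Definition in_P (N : nat) (S : list (nat -> R)) (xi : nat -> R) : Prop :=
  Rp N xi /\ forall pi, In pi S -> dot N xi pi <= 1.

Definition in_E (N : nat) (S : list (nat -> R)) (xi : nat -> R) : Prop :=
  in_P N S xi /\
  forall a b (t : R), in_P N S a -> in_P N S b -> 0 < t < 1 ->
    (forall n, xi n = t * a n + (1 - t) * b n) -> a = b.

Definition vle (N : nat) (x y : nat -> R) : Prop :=
  forall n, (n < N)%nat -> x n <= y n.

Definition in_Sstar (N : nat) (S : list (nat -> R)) (xi : nat -> R) : Prop :=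
  in_E N S xi /\ forall eta, in_E N S eta -> vle N xi eta -> eta = xi.

Definition in_Xi (N : nat) (S : list (nat -> R)) (lam xi : nat -> R) : Prop :=
  in_Sstar N S xi /\ dot N xi lam = 1.

Definition in_Xiplus (N : nat) (S : list (nat -> R)) (lam xi : nat -> R) : Prop :=
  in_E N S xi /\ dot N xi lam = 1.

(* Int0 f x = \int_0^x f (Riemann integral; chosen by epsilon, meaningful
   whenever f is Riemann integrable on [0,x]). *)
Definition Int0 (f : R -> R) (x : R) : R :=
  epsilon (inhabits 0)
    (fun I => exists pr : Riemann_integrable f 0 x, RiemannInt pr = I).

Definition Lfun (N : nat) (f : R -> R) (q : nat -> R) : R :=
  sumR (map (fun n => Int0 f (q n)) (seq 0 N)).

Definition unique_min (feas : (nat -> R) -> Prop) (J : (nat -> R) -> R)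
  (r : nat -> R) : Prop :=
  feas r /\ forall r', feas r' -> r' <> r -> J r < J r'.

Definition lift_feas (N : nat) (S : list (nat -> R)) (lam q r : nat -> R) : Prop :=
  Rp N r /\
  (forall xi, in_Xi N S lam xi -> dot N xi r >= dot N xi q) /\
  (forall n, (n < N)%nat -> lam n = 0 -> r n <= q n).

Definition LiftDelta (N : nat) (S : list (nat -> R)) (f : R -> R)
  (lam q : nat -> R) : nat -> R :=
  epsilon (inhabits (fun _ => 0))
    (unique_min (lift_feas N S lam q) (Lfun N f)).

Definition plus_feas (N : nat) (S : list (nat -> R)) (lam q r : nat -> R) : Prop :=
  Rp N r /\ (forall xi, in_Xiplus N S lam xi -> dot N xi r >= dot N xi q).

(* Main.v *)
Require Import Defs.
From Stdlib Require Import Reals List.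
From Stdlib Require Import Lra Lia ClassicalEpsilon Classical FunctionalExtensionality.
Import ListNotations.
Open Scope R_scope.


Section Sums.
Context {X : Type}.
Lemma sumR_app (a b : list R) : sumR (a ++ b) = sumR a + sumR b.
Proof. induction a; simpl; [lra|rewrite IHa; lra]. Qed.
Lemma sumR_ext (F G : X -> R) (l : list X) :
  (forall x, In x l -> F x = G x) -> sumR (map F l) = sumR (map G l).
Proof. induction l; simpl; intros H; auto. rewrite H, IHl; auto. Qed.
Lemma sumR_plus (F G : X -> R) l :
  sumR (map (fun x => F x + G x) l) = sumR (map F l) + sumR (map G l).
Proof. induction l; simpl; lra. Qed.
Lemma sumR_minus (F G : X -> R) l :
  sumR (map (fun x => F x - G x) l) = sumR (map F l) - sumR (map G l).
Proof. induction l; simpl; lra. Qed.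
Lemma sumR_scal (a : R) (F : X -> R) l :
  sumR (map (fun x => a * F x) l) = a * sumR (map F l).
Proof. induction l; simpl; [lra|rewrite IHl; lra]. Qed.
Lemma sumR_le (F G : X -> R) l :
  (forall x, In x l -> F x <= G x) -> sumR (map F l) <= sumR (map G l).
Proof. induction l; simpl; intros H; [lra|]. pose proof (H a (or_introl eq_refl)).
  assert (sumR (map F l) <= sumR (map G l)) by (apply IHl; auto). lra. Qed.
Lemma sumR_nonneg (F : X -> R) l :
  (forall x, In x l -> 0 <= F x) -> 0 <= sumR (map F l).
Proof. intros H. replace 0 with (sumR (map (fun _ => 0) l)).
  apply sumR_le; auto. induction l; simpl; auto. rewrite IHl; try lra. intros; apply H; simpl; auto. Qed.
Lemma sumR_lt (F G : X -> R) l x0 :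
  (forall x, In x l -> F x <= G x) -> In x0 l -> F x0 < G x0 ->
  sumR (map F l) < sumR (map G l).
Proof. induction l; simpl; intros H Hin Hlt; [contradiction|].
  destruct Hin as [<-|Hin].
  - assert (sumR (map F l) <= sumR (map G l)) by (apply sumR_le; auto). lra.
  - pose proof (H a (or_introl eq_refl)).
    assert (sumR (map F l) < sumR (map G l)) by (apply IHl; auto). lra. Qed.
Lemma sumR_zero_each (F : X -> R) l :
  (forall x, In x l -> 0 <= F x) -> sumR (map F l) = 0 -> forall x, In x l -> F x = 0.
Proof. intros H Hs x Hx. destruct (Req_dec (F x) 0) as [e|ne]; auto.
  exfalso. assert (sumR (map (fun _ => 0) l) < sumR (map F l)).
  { apply (sumR_lt _ _ _ x); auto. pose proof (H x Hx); lra. }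
  assert (sumR (map (fun _ : X => 0) l) = 0) by (clear; induction l; simpl; lra). lra. Qed.
Lemma sumR_abs (F : X -> R) l : Rabs (sumR (map F l)) <= sumR (map (fun x => Rabs (F x)) l).
Proof. induction l; simpl. rewrite Rabs_R0; lra.
  eapply Rle_trans. apply Rabs_triang. lra. Qed.
End Sums.

Lemma dot_comm N x y : dot N x y = dot N y x.
Proof. unfold dot. apply sumR_ext. intros; lra. Qed.
Lemma dot_ext N x y x' y' : (forall n, (n < N)%nat -> x n * y n = x' n * y' n) -> dot N x y = dot N x' y'.
Proof. intros H; unfold dot; apply sumR_ext. intros n Hn. apply in_seq in Hn. apply H; lia. Qed.
Lemma dot_lin2 N x y z a b : dot N x (fun n => a * y n + b * z n) = a * dot N x y + b * dot N x z.
Proof. unfold dot. rewrite <- !sumR_scal, <- sumR_plus. apply sumR_ext; intros; lra. Qed.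
Lemma dot_lin1 N x y z a b : dot N (fun n => a * y n + b * z n) x = a * dot N y x + b * dot N z x.
Proof. rewrite dot_comm, dot_lin2, !(dot_comm N x). auto. Qed.
Lemma dot_minus2 N x y z : dot N x (fun n => y n - z n) = dot N x y - dot N x z.
Proof. unfold dot. rewrite <- sumR_minus. apply sumR_ext; intros; lra. Qed.
Lemma dot_le N x y z : (forall n, (n < N)%nat -> x n * y n <= x n * z n) -> dot N x y <= dot N x z.
Proof. intros H; unfold dot; apply sumR_le. intros n Hn. apply in_seq in Hn. apply H; lia. Qed.
Lemma dot_nonneg N x y : (forall n, (n < N)%nat -> 0 <= x n * y n) -> 0 <= dot N x y.
Proof. intros H; unfold dot; apply sumR_nonneg. intros n Hn. apply in_seq in Hn. apply H; lia. Qed.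
Lemma dot_unit N (n : nat) (c : R) x : (n < N)%nat ->
  dot N (fun m => if Nat.eqb m n then c else 0) x = c * x n.
Proof.
  intros Hn. unfold dot. induction N. lia.
  rewrite seq_S, map_app, sumR_app. simpl.
  destruct (Nat.eq_dec n N) as [->|ne].
  - rewrite Nat.eqb_refl. replace (sumR (map (fun n0 : nat => (if (n0 =? N)%nat then c else 0) * x n0) (seq 0 N))) with 0. lra.
    rewrite (sumR_ext _ (fun _ => 0)). clear; induction (seq 0 N); simpl; lra.
    intros m Hm. apply in_seq in Hm. destruct (Nat.eqb_spec m N); [lia|lra].
  - rewrite IHN by lia. destruct (Nat.eqb_spec N n); [lia|lra].
Qed.

Section Anal.
Variable f : R -> R.
Hypothesis Hf_der : forall x, 0 <= x -> derivable_pt f x.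
Hypothesis Hf_inc : forall x y, 0 <= x -> x < y -> f x < f y.
Hypothesis Hf0 : f 0 = 0.

Lemma f_mono x y : 0 <= x -> x <= y -> f x <= f y.
Proof. intros. destruct (Req_dec x y) as [->|]; [lra|]. left; apply Hf_inc; lra. Qed.
Lemma f_nonneg x : 0 <= x -> 0 <= f x.
Proof. intros. rewrite <- Hf0. apply f_mono; lra. Qed.

Lemma int_ab a b : 0 <= a -> a <= b -> Riemann_integrable f a b.
Proof. intros. apply continuity_implies_RiemannInt; auto.
  intros x Hx. apply derivable_continuous_pt. apply Hf_der. lra. Qed.

Lemma F_eq x (pr : Riemann_integrable f 0 x) : 0 <= x -> Int0 f x = RiemannInt pr.
Proof. intros. unfold Int0.
  destruct (epsilon_spec (inhabits 0) (fun I => exists pr : Riemann_integrable f 0 x, RiemannInt pr = I)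
    (ex_intro _ (RiemannInt pr) (ex_intro _ pr eq_refl))) as [pr' H'].
  rewrite <- H'. apply RiemannInt_P5. Qed.

Lemma F0 : Int0 f 0 = 0.
Proof. rewrite (F_eq 0 (int_ab 0 0 (Rle_refl _) (Rle_refl _))) by lra. apply RiemannInt_P9. Qed.

Lemma F_diff x y (h1 : 0 <= x) (h2 : x <= y) : Int0 f y - Int0 f x = RiemannInt (int_ab x y h1 h2).
Proof. rewrite (F_eq y (int_ab 0 y ltac:(lra) ltac:(lra))) by lra.
  rewrite (F_eq x (int_ab 0 x ltac:(lra) ltac:(lra))) by lra.
  rewrite <- (RiemannInt_P26 (int_ab 0 x ltac:(lra) ltac:(lra)) (int_ab x y h1 h2)). lra. Qed.

Lemma F_bounds x y : 0 <= x -> x <= y -> f x * (y - x) <= Int0 f y - Int0 f x <= f y * (y - x).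
Proof. intros. rewrite (F_diff x y H H0). apply RiemannInt_const_bound; auto.
  intros t Ht; split; apply f_mono; lra. Qed.

Lemma F_strict x y : 0 <= x -> x < y -> f x * (y - x) < Int0 f y - Int0 f x < f y * (y - x).
Proof. intros. set (m := (x + y) / 2).
  pose proof (F_bounds x m ltac:(lra) ltac:(unfold m; lra)).
  pose proof (F_bounds m y ltac:(unfold m; lra) ltac:(unfold m; lra)).
  pose proof (Hf_inc x m ltac:(lra) ltac:(unfold m; lra)).
  pose proof (Hf_inc m y ltac:(unfold m; lra) ltac:(unfold m; lra)).
  assert (0 < m - x) by (unfold m; lra). assert (0 < y - m) by (unfold m; lra).
  split; nra. Qed.

Lemma F_subgrad x y : 0 <= x -> 0 <= y -> f x * (y - x) <= Int0 f y - Int0 f x.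
Proof. intros. destruct (Rtotal_order x y) as [|[->|]].
  - pose proof (F_strict x y); lra.
  - lra.
  - pose proof (F_strict y x); lra. Qed.
Lemma F_subgrad_strict x y : 0 <= x -> 0 <= y -> x <> y -> f x * (y - x) < Int0 f y - Int0 f x.
Proof. intros. destruct (Rtotal_order x y) as [|[->|]].
  - pose proof (F_strict x y); lra.
  - lra.
  - pose proof (F_strict y x); lra. Qed.

Lemma F_nonneg x : 0 <= x -> 0 <= Int0 f x.
Proof. intros. pose proof (F_subgrad 0 x ltac:(lra) H). rewrite F0, Hf0 in H0. lra. Qed.
Lemma F_coerc x : 0 <= x -> f 1 * (x - 1) <= Int0 f x.
Proof. intros. pose proof (F_subgrad 1 x ltac:(lra) H). pose proof (F_nonneg 1 ltac:(lra)). lra. Qed.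
Lemma F_lip x y M : 0 <= x <= M -> 0 <= y <= M -> Rabs (Int0 f y - Int0 f x) <= f M * Rabs (y - x).
Proof. intros. pose proof (f_nonneg x ltac:(lra)). pose proof (f_mono x M ltac:(lra) ltac:(lra)).
  pose proof (f_mono y M ltac:(lra) ltac:(lra)).
  destruct (Rle_dec x y).
  - pose proof (F_bounds x y ltac:(lra) r).
    assert (0 <= f x * (y - x)) by (apply Rmult_le_pos; lra).
    assert (f y * (y - x) <= f M * (y - x)) by (apply Rmult_le_compat_r; lra).
    rewrite !Rabs_right by lra. lra.
  - pose proof (F_bounds y x ltac:(lra) ltac:(lra)). pose proof (f_nonneg y ltac:(lra)).
    assert (0 <= f y * (x - y)) by (apply Rmult_le_pos; lra).
    assert (f x * (x - y) <= f M * (x - y)) by (apply Rmult_le_compat_r; lra).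
    rewrite Rabs_left1, Rabs_left1 by lra. lra. Qed.
Lemma F_mono_strict x y : 0 <= x -> x < y -> Int0 f x < Int0 f y.
Proof. intros. pose proof (F_strict x y H H0). pose proof (f_nonneg x H). nra. Qed.
End Anal.

Lemma vec_eq N (x y : nat -> R) : Rp N x -> Rp N y -> (forall n, (n < N)%nat -> x n = y n) -> x = y.
Proof. intros [_ Hx] [_ Hy] H. apply functional_extensionality. intros n.
  destruct (Nat.lt_ge_cases n N). auto. rewrite Hx, Hy; auto. Qed.
Lemma vec_neq N (x y : nat -> R) : Rp N x -> Rp N y -> x <> y -> exists n, (n < N)%nat /\ x n <> y n.
Proof. intros. apply NNPP. intros Hc. apply H1. apply vec_eq with N; auto.
  intros n Hn. apply NNPP. intros Hne. apply Hc. eauto. Qed.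

Lemma sumR_ge_term {X} (F : X -> R) l x0 : (forall x, In x l -> 0 <= F x) -> In x0 l -> F x0 <= sumR (map F l).
Proof. induction l; simpl; intros H Hin. contradiction.
  destruct Hin as [->|Hin].
  - pose proof (sumR_nonneg F l ltac:(auto)). lra.
  - pose proof (H a (or_introl eq_refl)). pose proof (IHl ltac:(auto) Hin). lra. Qed.

Section LProps.
Variable f : R -> R.
Hypothesis Hf_der : forall x, 0 <= x -> derivable_pt f x.
Hypothesis Hf_inc : forall x y, 0 <= x -> x < y -> f x < f y.
Hypothesis Hf0 : f 0 = 0.
Variable N : nat.

Lemma L_subgrad r r' : Rp N r -> Rp N r' ->
  sumR (map (fun n => f (r n) * (r' n - r n)) (seq 0 N)) <= Lfun N f r' - Lfun N f r.
Proof. intros [Hr _] [Hr' _]. unfold Lfun. rewrite <- sumR_minus. apply sumR_le.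
  intros n Hn; apply in_seq in Hn. apply F_subgrad; auto; [apply Hr|apply Hr']; lia. Qed.
Lemma L_subgrad_strict r r' : Rp N r -> Rp N r' -> r <> r' ->
  sumR (map (fun n => f (r n) * (r' n - r n)) (seq 0 N)) < Lfun N f r' - Lfun N f r.
Proof. intros Hr0 Hr'0 Hne. destruct (vec_neq N r r' Hr0 Hr'0 Hne) as [n0 [Hn0 Hne0]].
  destruct Hr0 as [Hr _], Hr'0 as [Hr' _]. unfold Lfun. rewrite <- sumR_minus. apply sumR_lt with n0.
  intros n Hn; apply in_seq in Hn. apply F_subgrad; auto; [apply Hr|apply Hr']; lia.
  apply in_seq; lia. apply F_subgrad_strict; auto. Qed.

Definition mid (r1 r2 : nat -> R) := fun n => (r1 n + r2 n) / 2.
Lemma Rp_mid r1 r2 : Rp N r1 -> Rp N r2 -> Rp N (mid r1 r2).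
Proof. intros [H1 H1'] [H2 H2']; split; intros n Hn; unfold mid.
  pose proof (H1 n Hn); pose proof (H2 n Hn); lra. rewrite H1', H2'; auto; lra. Qed.

Lemma L_mid_strict r1 r2 : Rp N r1 -> Rp N r2 -> r1 <> r2 ->
  Lfun N f (mid r1 r2) < (Lfun N f r1 + Lfun N f r2) / 2.
Proof. intros H1 H2 Hne. pose proof (Rp_mid _ _ H1 H2) as Hm.
  assert (mid r1 r2 <> r1).
  { intros He. apply Hne. apply vec_eq with N; auto. intros n Hn.
    assert (mid r1 r2 n = r1 n) by (rewrite He; auto). unfold mid in H. lra. }
  pose proof (L_subgrad_strict _ _ Hm H1 ltac:(auto)) as A1.
  pose proof (L_subgrad _ _ Hm H2) as A2.
  pose proof (Rplus_lt_le_compat _ _ _ _ A1 A2) as A3.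
  rewrite <- sumR_plus in A3.
  rewrite (sumR_ext _ (fun _ => 0)) in A3.
  assert (sumR (map (fun _ : nat => 0) (seq 0 N)) = 0) by (clear; induction (seq 0 N); simpl; lra). lra.
  intros n _. unfold mid. lra. Qed.

Lemma L_nonneg r : Rp N r -> 0 <= Lfun N f r.
Proof. intros [H _]. apply sumR_nonneg. intros n Hn; apply in_seq in Hn. apply F_nonneg; auto. apply H; lia. Qed.

Lemma L_coord r n : Rp N r -> (n < N)%nat -> f 1 * (r n - 1) <= Lfun N f r.
Proof. intros [H _] Hn. unfold Lfun.
  eapply Rle_trans. apply (F_coerc f Hf_der Hf_inc Hf0 (r n)). apply H; auto.
  apply (sumR_ge_term (fun m => Int0 f (r m))). intros m Hm; apply in_seq in Hm. apply F_nonneg; auto. apply H; lia.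
  apply in_seq; lia. Qed.

Lemma L_lip r r' M : Rp N r -> Rp N r' -> (forall n, (n < N)%nat -> r n <= M /\ r' n <= M) ->
  Rabs (Lfun N f r' - Lfun N f r) <= f M * sumR (map (fun n => Rabs (r' n - r n)) (seq 0 N)).
Proof. intros [H1 _] [H2 _] HM. unfold Lfun. rewrite <- sumR_minus, <- sumR_scal.
  eapply Rle_trans. apply sumR_abs. apply sumR_le. intros n Hn; apply in_seq in Hn.
  apply F_lip; auto. split; [apply H1; lia|apply HM; lia]. split; [apply H2; lia|apply HM; lia]. Qed.

Lemma F_mono x y : 0 <= x -> x <= y -> Int0 f x <= Int0 f y.
Proof. intros. pose proof (F_subgrad f Hf_der Hf_inc x y H ltac:(lra)).
  assert (0 <= f x) by (eapply f_nonneg; eauto). assert (0 <= f x * (y - x)) by (apply Rmult_le_pos; lra). lra. Qed.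

Lemma L_mono_strict r r' : Rp N r -> Rp N r' -> (forall n, (n < N)%nat -> r n <= r' n) -> r <> r' ->
  Lfun N f r < Lfun N f r'.
Proof. intros Hr Hr' Hle Hne. destruct (vec_neq N r r' Hr Hr' Hne) as [n0 [Hn0 Hne0]].
  destruct Hr as [Hr _]. unfold Lfun. apply sumR_lt with n0.
  intros n Hn; apply in_seq in Hn. apply F_mono; auto. apply Hr; lia. apply Hle; lia.
  apply in_seq; lia. apply F_mono_strict; auto. pose proof (Hle n0 Hn0). lra. Qed.
End LProps.

Definition incr (phi : nat -> nat) := forall k, (phi k < phi (S k))%nat.
Lemma incr_ge phi : incr phi -> forall k, (k <= phi k)%nat.
Proof. intros H k; induction k. lia. specialize (H k); lia. Qed.
Lemma incr_mono phi : incr phi -> forall k k', (k <= k')%nat -> (phi k <= phi k')%nat.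
Proof. intros H k k' Hk. induction Hk. lia. specialize (H m); lia. Qed.
Lemma incr_comp phi psi : incr phi -> incr psi -> incr (fun k => phi (psi k)).
Proof. intros H1 H2 k. pose proof (incr_mono phi H1 (S (psi k)) (psi (S k)) (H2 k)). specialize (H1 (psi k)). lia. Qed.

Lemma cv_sub v l phi : Un_cv v l -> incr phi -> Un_cv (fun k => v (phi k)) l.
Proof. intros H Hp eps He. destruct (H eps He) as [K HK]. exists K. intros k Hk.
  apply HK. pose proof (incr_ge phi Hp k). lia. Qed.

Lemma small_inv eps : 0 < eps -> exists K : nat, forall k, (K <= k)%nat -> / (INR k + 1) < eps.
Proof. intros He. destruct (archimed_cor1 eps He) as [K [HK HK0]]. exists K. intros k Hk.
  apply le_INR in Hk. assert (0 < INR K) by (apply lt_0_INR; auto).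
  eapply Rle_lt_trans; [|exact HK]. apply Rinv_le_contravar; lra. Qed.

Lemma extract w l : ValAdh w l -> exists psi, incr psi /\ Un_cv (fun k => w (psi k)) l.
Proof. intros H.
  assert (G : forall k Nn : nat, {p : nat | (Nn <= p)%nat /\ Rabs (w p - l) < / (INR k + 1)}).
  { intros k Nn. apply constructive_indefinite_description.
    assert (Hp : 0 < / (INR k + 1)) by (apply Rinv_0_lt_compat; pose proof (pos_INR k); lra).
    destruct (H (disc l (mkposreal _ Hp)) Nn) as [p [Hp1 Hp2]].
    exists (mkposreal _ Hp). intros y Hy; auto.
    exists p. split; auto. }
  exists (fix psi k := match k with O => proj1_sig (G O O) | S k' => proj1_sig (G (S k') (S (psi k'))) end).
  split.
  - intros k. simpl. match goal with |- context[proj1_sig (G (S k) ?X)] => pose proof (proj1 (proj2_sig (G (S k) X))) end. simpl in *. lia.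
  - intros eps He. destruct (small_inv eps He) as [K HK]. exists K. intros k Hk.
    unfold Rdist. destruct k; simpl.
    + pose proof (proj2 (proj2_sig (G 0%nat 0%nat))) as Hp. eapply Rlt_trans. exact Hp. apply HK; lia.
    + match goal with |- context[proj1_sig (G (S k) ?X)] => pose proof (proj2 (proj2_sig (G (S k) X))) as Hp end.
      eapply Rlt_trans. exact Hp. apply HK; lia.
Qed.

Lemma cv_bounds v l a b : Un_cv v l -> (forall k, a <= v k <= b) -> a <= l <= b.
Proof. intros H Hb. split; apply Rnot_lt_le; intros Hc.
  - destruct (H (a - l) ltac:(lra)) as [K HK]. specialize (HK K (le_n _)). specialize (Hb K).
    unfold Rdist in HK. apply Rabs_def2 in HK. lra.
  - destruct (H (l - b) ltac:(lra)) as [K HK]. specialize (HK K (le_n _)). specialize (Hb K).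
    unfold Rdist in HK. apply Rabs_def2 in HK. lra. Qed.

Lemma subseq_multi (u : nat -> nat -> R) M : (forall k n, 0 <= u k n <= M) ->
  forall j, exists phi lim, incr phi /\ forall n, (n < j)%nat -> Un_cv (fun k => u (phi k) n) (lim n).
Proof. intros Hb j. induction j.
  - exists (fun k => k), (fun _ => 0). split. intros k; lia. intros; lia.
  - destruct IHj as [phi [lim [Hp Hc]]].
    destruct (Bolzano_Weierstrass (fun k => u (phi k) j) (fun c => 0 <= c <= M) (compact_P3 0 M)
      (fun k => Hb (phi k) j)) as [l Hl].
    destruct (extract _ _ Hl) as [psi [Hpsi Hcv]].
    exists (fun k => phi (psi k)), (fun n => if Nat.eqb n j then l else lim n). split.
    apply incr_comp; auto.
    intros n Hn. destruct (Nat.eqb_spec n j) as [->|ne]. auto.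
    apply (cv_sub (fun k => u (phi k) n)); auto. apply Hc; lia. Qed.

Lemma unif j (v : nat -> nat -> R) l : (forall n, (n < j)%nat -> Un_cv (fun k => v k n) (l n)) ->
  forall eps, 0 < eps -> exists K, forall k, (K <= k)%nat -> forall n, (n < j)%nat -> Rabs (v k n - l n) < eps.
Proof. induction j; intros H eps He.
  - exists O. intros; lia.
  - destruct (IHj ltac:(intros; apply H; lia) eps He) as [K1 HK1].
    destruct (H j ltac:(lia) eps He) as [K2 HK2].
    exists (Nat.max K1 K2). intros k Hk n Hn.
    destruct (Nat.eq_dec n j) as [->|ne]. apply HK2; lia. apply HK1; lia. Qed.

Lemma sumR_const {X} (c : R) (l : list X) : sumR (map (fun _ => c) l) = INR (length l) * c.
Proof. induction l. simpl; lra. change (length (a::l)) with (S (length l)). rewrite S_INR. simpl sumR. rewrite IHl. lra. Qed.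

Section Exist.
Variable f : R -> R.
Hypothesis Hf_der : forall x, 0 <= x -> derivable_pt f x.
Hypothesis Hf_inc : forall x y, 0 <= x -> x < y -> f x < f y.
Hypothesis Hf0 : f 0 = 0.
Variable N : nat.

Theorem exists_umin (K : (nat -> R) -> Prop) :
  (forall r, K r -> Rp N r) -> (exists r, K r) ->
  (forall r1 r2, K r1 -> K r2 -> K (mid r1 r2)) ->
  (forall r, Rp N r -> (forall eps, 0 < eps -> exists r', K r' /\ forall n, (n < N)%nat -> Rabs (r n - r' n) < eps) -> K r) ->
  exists r, unique_min K (Lfun N f) r.
Proof.
  intros HRp [q0 Hq0] Hconv Hclos.
  set (E := fun y => exists r, K r /\ y = - Lfun N f r).
  destruct (completeness E) as [l [Hub Hlub]].
  { exists 0. intros y [r [Hr ->]]. pose proof (L_nonneg f Hf_der Hf_inc Hf0 N r (HRp r Hr)). lra. }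
  { exists (- Lfun N f q0). exists q0; auto. }
  set (m := - l).
  assert (Hlow : forall r, K r -> m <= Lfun N f r).
  { intros r Hr. assert (E (- Lfun N f r)) by (exists r; auto). apply Hub in H. unfold m; lra. }
  assert (Happ : forall eps, 0 < eps -> exists r, K r /\ Lfun N f r < m + eps).
  { intros eps He. apply NNPP. intros Hc.
    assert (is_upper_bound E (l - eps)).
    { intros y [r [Hr ->]]. apply Rnot_lt_le. intros Hlt. apply Hc. exists r. split; auto. unfold m; lra. }
    apply Hlub in H. lra. }
  assert (G : forall k : nat, {r | K r /\ Lfun N f r < m + / (INR k + 1)}).
  { intros k. apply constructive_indefinite_description. apply Happ.
    apply Rinv_0_lt_compat; pose proof (pos_INR k); lra. }
  set (u := fun k => proj1_sig (G k)).
  assert (Hu : forall k, K (u k) /\ Lfun N f (u k) < m + / (INR k + 1)) by (intros; apply (proj2_sig (G k))).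
  assert (Hinv1 : forall k, / (INR k + 1) <= 1).
  { intros k. pose proof (pos_INR k). rewrite <- Rinv_1. apply Rinv_le_contravar; lra. }
  set (B := Lfun N f q0 + 1).
  assert (HB : forall k, Lfun N f (u k) < B).
  { intros k. destruct (Hu k) as [_ H]. pose proof (Hlow q0 Hq0). pose proof (Hinv1 k). unfold B; lra. }
  assert (Hf1 : 0 < f 1) by (rewrite <- Hf0; apply Hf_inc; lra).
  assert (HB0 : 1 <= B) by (pose proof (L_nonneg f Hf_der Hf_inc Hf0 N q0 (HRp q0 Hq0)); unfold B; lra).
  set (M := 1 + B / f 1).
  assert (HM0 : 0 <= M) by (unfold M; assert (0 < B / f 1) by (apply Rdiv_lt_0_compat; lra); lra).
  assert (Hbox : forall k n, 0 <= u k n <= M).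
  { intros k n. destruct (HRp (u k) (proj1 (Hu k))) as [H1 H2].
    destruct (Nat.lt_ge_cases n N) as [Hn|Hn].
    - split. apply H1; auto.
      pose proof (L_coord f Hf_der Hf_inc Hf0 N (u k) n (HRp (u k) (proj1 (Hu k))) Hn).
      pose proof (HB k). unfold M.
      assert (u k n - 1 < B / f 1). { apply Rmult_lt_reg_l with (f 1); auto. field_simplify; lra. }
      lra.
    - rewrite H2; auto. lra. }
  destruct (subseq_multi u M Hbox N) as [phi [lim [Hphi Hcv]]].
  set (rs := fun n => if Nat.ltb n N then lim n else 0).
  assert (Hrs_n : forall n, (n < N)%nat -> rs n = lim n).
  { intros n Hn. unfold rs. destruct (Nat.ltb_spec n N); auto; lia. }
  assert (Hlimb : forall n, (n < N)%nat -> 0 <= lim n <= M).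
  { intros n Hn. apply (cv_bounds _ _ _ _ (Hcv n Hn)). intros k; apply Hbox. }
  assert (HRs : Rp N rs).
  { split; intros n Hn. rewrite Hrs_n; auto. apply Hlimb; auto.
    unfold rs. destruct (Nat.ltb_spec n N); auto; lia. }
  assert (Hcv' : forall n, (n < N)%nat -> Un_cv (fun k => u (phi k) n) (rs n)).
  { intros n Hn. rewrite Hrs_n; auto. }
  assert (HKrs : K rs).
  { apply Hclos; auto. intros eps He.
    destruct (unif N (fun k n => u (phi k) n) rs Hcv' eps He) as [Kk HKk].
    exists (u (phi Kk)). split. apply Hu. intros n Hn. rewrite Rabs_minus_sym. apply HKk; auto. }
  assert (HLrs : Lfun N f rs <= m).
  { apply Rnot_lt_le. intros Hlt. set (eps := Lfun N f rs - m).
    assert (He : 0 < eps) by (unfold eps; lra).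
    set (c := f M * INR N + 1).
    assert (Hc : 0 < c).
    { unfold c. pose proof (pos_INR N). assert (0 <= f M) by (eapply f_nonneg; eauto). nra. }
    set (e' := eps / (2 * c)).
    assert (He' : 0 < e') by (unfold e'; apply Rdiv_lt_0_compat; lra).
    destruct (unif N (fun k n => u (phi k) n) rs Hcv' e' He') as [K1 HK1].
    destruct (small_inv (eps / 2) ltac:(lra)) as [K2 HK2].
    set (k := Nat.max K1 K2).
    assert (Hr'K := proj1 (Hu (phi k))).
    pose proof (L_lip f Hf_der Hf_inc Hf0 N rs (u (phi k)) M HRs (HRp _ Hr'K)) as Hlip.
    assert (Hsum : sumR (map (fun n => Rabs (u (phi k) n - rs n)) (seq 0 N)) <= INR N * e').
    { rewrite <- (length_seq N 0) at 2. rewrite <- sumR_const. apply sumR_le.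
      intros n Hn; apply in_seq in Hn. left. apply HK1. unfold k; lia. lia. }
    assert (HfM : 0 <= f M) by (eapply f_nonneg; eauto).
    assert (f M * sumR (map (fun n => Rabs (u (phi k) n - rs n)) (seq 0 N)) < eps / 2).
    { eapply Rle_lt_trans. apply Rmult_le_compat_l; [exact HfM|exact Hsum].
      unfold e'. apply Rmult_lt_reg_l with (2 * c). lra.
      replace (2 * c * (f M * (INR N * (eps / (2 * c))))) with (f M * INR N * eps) by (field; lra).
      unfold c. pose proof (pos_INR N). nra. }
    assert (Hlip' : Rabs (Lfun N f (u (phi k)) - Lfun N f rs) < eps / 2).
    { eapply Rle_lt_trans. apply Hlip. intros n Hn. split. rewrite Hrs_n; auto; apply Hlimb; auto. apply Hbox. auto. }
    apply Rabs_def2 in Hlip'.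
    pose proof (proj2 (Hu (phi k))).
    assert (/ (INR (phi k) + 1) < eps / 2).
    { apply HK2. pose proof (incr_ge phi Hphi k). unfold k in *; lia. }
    unfold eps in *. lra. }
  exists rs. split; auto. intros r' Hr' Hne.
  pose proof (Hlow r' Hr'). pose proof (Hlow rs HKrs).
  destruct (Rle_lt_or_eq_dec _ _ H) as [Hl|He]. lra.
  exfalso. pose proof (Hconv _ _ HKrs Hr').
  pose proof (Hlow _ H1).
  pose proof (L_mid_strict f Hf_der Hf_inc N rs r' HRs (HRp _ Hr') (not_eq_sym Hne)).
  lra.
Qed.
End Exist.

Lemma conv_eq (x y c t : R) : x <= c -> y <= c -> 0 < t < 1 -> t * x + (1 - t) * y = c -> x = c /\ y = c.
Proof. intros. assert (0 <= t * (c - x)) by (apply Rmult_le_pos; lra).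
  assert (0 <= (1 - t) * (c - y)) by (apply Rmult_le_pos; lra).
  assert (t * (c - x) = 0) by nra. assert ((1 - t) * (c - y) = 0) by nra.
  apply Rmult_integral in H5; apply Rmult_integral in H6. lra. Qed.

Lemma dot_step N x y z s : dot N x (fun n => y n + s * z n) = dot N x y + s * dot N x z.
Proof. replace (dot N x y + s * dot N x z) with (1 * dot N x y + s * dot N x z) by ring. rewrite <- (dot_lin2 N x y z 1 s). apply dot_ext. intros; lra. Qed.
Lemma dot_conv N x a b t : dot N x (fun n => t * a n + (1 - t) * b n) = t * dot N x a + (1 - t) * dot N x b.
Proof. apply dot_lin2. Qed.

Definition cu (n : nat) : nat -> R := fun m => if Nat.eqb m n then -1 else 0.
Definition cstr N (S : list (nat -> R)) : list ((nat -> R) * R) :=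
  map (fun n => (cu n, 0)) (seq 0 N) ++ map (fun p => (p, 1)) S.

Lemma dot_cu N n x : (n < N)%nat -> dot N (cu n) x = - x n.
Proof. intros. unfold cu. rewrite dot_unit; auto; lra. Qed.

Lemma in_cons_coord N S n : (n < N)%nat -> In (cu n, 0) (cstr N S).
Proof. intros. unfold cstr. apply in_or_app. left. apply in_map_iff. exists n. split; auto. apply in_seq; lia. Qed.
Lemma in_cons_pi N (S : list (nat -> R)) p : In p S -> In (p, 1) (cstr N S).
Proof. intros. unfold cstr. apply in_or_app. right. apply in_map_iff. exists p; auto. Qed.

Lemma inP_cons N S x : in_P N S x -> forall c, In c (cstr N S) -> dot N (fst c) x <= snd c.
Proof. intros [[H1 H2] H3] c Hc. unfold cstr in Hc. apply in_app_or in Hc. destruct Hc as [Hc|Hc];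
  apply in_map_iff in Hc; destruct Hc as [y [<- Hy]]; simpl.
  - apply in_seq in Hy. rewrite dot_cu by lia. pose proof (H1 y ltac:(lia)). lra.
  - rewrite dot_comm. auto. Qed.
Lemma cons_inP N S x : (forall n, (N <= n)%nat -> x n = 0) ->
  (forall c, In c (cstr N S) -> dot N (fst c) x <= snd c) -> in_P N S x.
Proof. intros H1 H2. split. split; auto.
  - intros n Hn. pose proof (H2 _ (in_cons_coord N S n Hn)). simpl in H. rewrite dot_cu in H; auto. lra.
  - intros p Hp. pose proof (H2 _ (in_cons_pi N S p Hp)). simpl in H. rewrite dot_comm; auto. Qed.

Lemma active_conv N S xi a b t c : in_P N S a -> in_P N S b -> 0 < t < 1 ->
  (forall n, xi n = t * a n + (1 - t) * b n) -> In c (cstr N S) -> dot N (fst c) xi = snd c ->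
  dot N (fst c) a = snd c /\ dot N (fst c) b = snd c.
Proof. intros Ha Hb Ht Hxi Hc Hact. apply conv_eq with t; auto.
  apply (inP_cons N S a Ha c Hc). apply (inP_cons N S b Hb c Hc).
  rewrite <- dot_conv. rewrite <- Hact. apply dot_ext. intros; rewrite Hxi; auto. Qed.

Definition act N (x : nat -> R) (c : (nat -> R) * R) : bool :=
  if Req_EM_T (dot N (fst c) x) (snd c) then true else false.
Lemma act_true N x c : act N x c = true <-> dot N (fst c) x = snd c.
Proof. unfold act. destruct (Req_EM_T _ _); split; intros; auto; congruence. Qed.
Lemma act_false N x c : act N x c = false <-> dot N (fst c) x <> snd c.
Proof. unfold act. destruct (Req_EM_T _ _); split; intros; auto; congruence. Qed.

Definition pat N S x := map (act N x) (cstr N S).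

Lemma map_eq_in {X Y} (F G : X -> Y) l : map F l = map G l -> forall x, In x l -> F x = G x.
Proof. induction l; simpl; intros H x Hx. contradiction. injection H; intros. destruct Hx as [<-|]; auto. Qed.

Lemma small_step {X} (l : list X) (g h : X -> R) : exists s, 0 < s /\ forall x, In x l -> 0 < h x -> s * g x <= h x.
Proof. induction l.
  - exists 1. split. lra. intros; contradiction.
  - destruct IHl as [s [Hs H]].
    destruct (Rlt_dec 0 (h a)) as [Ha|Ha]; [destruct (Rlt_dec 0 (g a)) as [Hg|Hg]|].
    + exists (Rmin s (h a / g a)). split. apply Rmin_pos; auto. apply Rdiv_lt_0_compat; auto.
      intros x [<-|Hx] Hh.
      * assert (Rmin s (h a / g a) * g a <= h a / g a * g a) by (apply Rmult_le_compat_r; [lra|apply Rmin_r]).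
        field_simplify in H0; lra.
      * pose proof (H x Hx Hh). destruct (Rle_dec 0 (g x)).
        -- assert (Rmin s (h a / g a) * g x <= s * g x) by (apply Rmult_le_compat_r; [lra|apply Rmin_l]). lra.
        -- assert (0 < Rmin s (h a / g a)) by (apply Rmin_pos; auto; apply Rdiv_lt_0_compat; auto). nra.
    + exists s. split; auto. intros x [<-|Hx] Hh; auto. nra.
    + exists s. split; auto. intros x [<-|Hx] Hh; auto. lra. Qed.

Lemma E_inj N S x y : in_E N S x -> in_E N S y -> pat N S x = pat N S y -> x = y.
Proof. intros [Hx Hxe] [Hy _] Hp. pose proof (map_eq_in _ _ _ Hp) as Hpc.
  destruct (small_step (cstr N S) (fun c => dot N (fst c) x - dot N (fst c) y) (fun c => snd c - dot N (fst c) x))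
    as [s [Hs Hss]].
  set (a := fun n => x n + s * (x n - y n)).
  assert (Ha : in_P N S a).
  { apply cons_inP.
    - intros n Hn. unfold a. rewrite (proj2 (proj1 Hx)), (proj2 (proj1 Hy)); auto. lra.
    - intros c Hc. unfold a. rewrite dot_step, dot_minus2.
      destruct (act N x c) eqn:E.
      + pose proof E as E'. rewrite Hpc in E' by auto. apply act_true in E, E'. rewrite E, E'. lra.
      + apply act_false in E. pose proof (inP_cons N S x Hx c Hc).
        apply Hss in Hc; lra. }
  assert (Hae : a = y).
  { apply (Hxe a y (1 / (1 + s))); auto. split. apply Rdiv_lt_0_compat; lra.
    apply Rmult_lt_reg_l with (1 + s). lra. field_simplify; lra.
    intros n. unfold a. field. lra. }
  apply functional_extensionality. intros n.
  assert (a n = y n) by (rewrite Hae; auto). unfold a in H.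
  assert ((1 + s) * (x n - y n) = 0) by lra. apply Rmult_integral in H0. lra. Qed.

Definition freec (S : list (nat -> R)) n := forall p, In p S -> p n = 0.

Lemma E_free N S x n : in_E N S x -> (n < N)%nat -> freec S n -> x n = 0.
Proof. intros [Hx Hxe] Hn Hf. apply NNPP; intros Hne.
  set (s := x n). set (en := fun m => if Nat.eqb m n then 1 else 0).
  assert (Hs : 0 < s) by (pose proof (proj1 (proj1 Hx) n Hn); unfold s; lra).
  set (a := fun m => x m + s * en m). set (b := fun m => x m + (- s) * en m).
  assert (Hab : forall s', in_P N S (fun m => x m + s' * en m) -> True) by auto.
  assert (HP : forall s', - s <= s' -> in_P N S (fun m => x m + s' * en m)).
  { intros s' Hs'. split. split.
    - intros m Hm. unfold en. destruct (Nat.eqb_spec m n) as [->|]. unfold s in *; lra.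
      pose proof (proj1 (proj1 Hx) m Hm). lra.
    - intros m Hm. unfold en. destruct (Nat.eqb_spec m n). lia. rewrite (proj2 (proj1 Hx)); auto; lra.
    - intros p Hp. rewrite dot_comm, dot_step, (dot_comm N p x), (dot_comm N p en). unfold en. rewrite dot_unit; auto.
      rewrite (Hf p Hp). pose proof ((proj2 Hx) p Hp). lra. }
  assert (Heq : a = b).
  { apply (Hxe a b (1/2)). apply HP; lra. apply HP; lra. lra.
    intros m; unfold a, b; lra. }
  assert (a n = b n) by (rewrite Heq; auto). unfold a, b, en in H. rewrite Nat.eqb_refl in H. lra. Qed.

Lemma filter_le {X} (P Q : X -> bool) l : (forall x, In x l -> Q x = true -> P x = true) ->
  (length (filter Q l) <= length (filter P l))%nat.
Proof. intros H. induction l; simpl. lia. destruct (Q a) eqn:E.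
  rewrite (H a (or_introl eq_refl) E). simpl. pose proof (IHl ltac:(intros; apply H; simpl; auto)); lia.
  pose proof (IHl ltac:(intros; apply H; simpl; auto)). destruct (P a); simpl; lia. Qed.
Lemma filter_lt {X} (P Q : X -> bool) l x0 : (forall x, In x l -> Q x = true -> P x = true) ->
  In x0 l -> P x0 = true -> Q x0 = false -> (length (filter Q l) < length (filter P l))%nat.
Proof. intros H. induction l; simpl; intros Hin HP HQ. contradiction.
  destruct Hin as [->|Hin].
  - rewrite HP, HQ. simpl. pose proof (filter_le P Q l ltac:(intros; apply H; simpl; auto)). lia.
  - pose proof (IHl ltac:(intros; apply H; simpl; auto) Hin HP HQ). destruct (Q a) eqn:E.
    rewrite (H a (or_introl eq_refl) E). simpl; lia. destruct (P a); simpl; lia. Qed.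

Fixpoint allb (k : nat) : list (list bool) :=
  match k with O => [[]] | S k' => map (cons true) (allb k') ++ map (cons false) (allb k') end.
Lemma allb_in k p : length p = k -> In p (allb k).
Proof. revert p; induction k; intros p Hp; destruct p; simpl in *; try lia; auto.
  apply in_or_app. destruct b; [left|right]; apply in_map; apply IHk; lia. Qed.

Definition decP (P : Prop) : bool := if excluded_middle_informative P then true else false.
Lemma decP_true P : decP P = true <-> P.
Proof. unfold decP. destruct (excluded_middle_informative P); split; auto; congruence. Qed.
Lemma decP_false P : decP P = false <-> ~ P.
Proof. unfold decP. destruct (excluded_middle_informative P); split; intros; auto; try congruence; contradiction. Qed.

Definition meas N S x :=
  length (filter (fun p => decP (exists y, in_E N S y /\ vle N x y /\ pat N S y = p)) (allb (length (cstr N S)))).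

Lemma vle_refl N x : vle N x x.
Proof. intros n Hn; lra. Qed.
Lemma vle_trans N x y z : vle N x y -> vle N y z -> vle N x z.
Proof. intros H1 H2 n Hn; specialize (H1 n Hn); specialize (H2 n Hn); lra. Qed.

Lemma meas_lt N S x y : in_E N S x -> in_E N S y -> vle N x y -> y <> x -> (meas N S y < meas N S x)%nat.
Proof. intros Hx Hy Hxy Hne. apply filter_lt with (pat N S x).
  - intros p _ Hp; cbv beta in *; apply (proj1 (decP_true _)) in Hp; apply (proj2 (decP_true _)); destruct Hp as [z [Hz [Hyz Hpz]]].
    exists z; split; auto; split; auto. eapply vle_trans; eauto.
  - apply allb_in; unfold pat; rewrite length_map; auto.
  - cbv beta; apply (proj2 (decP_true _)); exists x; split; auto; split; auto. apply vle_refl.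
  - cbv beta; apply (proj2 (decP_false _)); intros [z [Hz [Hyz Hpz]]].
    pose proof (E_inj N S z x Hz Hx Hpz) as ->.
    apply Hne; apply vec_eq with N; [apply (proj1 (proj1 Hy))|apply (proj1 (proj1 Hx))|].
    intros n Hn; specialize (Hxy n Hn); specialize (Hyz n Hn); lra. Qed.

Lemma exists_max N S x0 : in_E N S x0 -> exists x', in_Sstar N S x' /\ vle N x0 x'.
Proof.
  assert (forall k x, in_E N S x -> (meas N S x <= k)%nat -> exists x', in_Sstar N S x' /\ vle N x x').
  { induction k as [|k IH]; intros x Hx Hm;
    (destruct (classic (forall y, in_E N S y -> vle N x y -> y = x)) as [Hmax|Hnm];
     [exists x; split; [split; auto|apply vle_refl]|]);
    apply not_all_ex_not in Hnm; destruct Hnm as [y Hy];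
     apply imply_to_and in Hy; destruct Hy as [Hy Hy']; apply imply_to_and in Hy'; destruct Hy' as [Hxy Hne];
     pose proof (meas_lt N S x y Hx Hy Hxy Hne).
    - lia.
    - destruct (IH y Hy ltac:(lia)) as [x' [Hx' Hyx']]. exists x'. split; auto.
      eapply vle_trans; eauto. }
  intros Hx. apply (H (meas N S x0) x0 Hx (le_n _)). Qed.

Lemma dot_scal2 N x y s : dot N x (fun n => s * y n) = s * dot N x y.
Proof. unfold dot. rewrite <- sumR_scal. apply sumR_ext. intros; lra. Qed.

Lemma list_argmin {X} (l : list X) (P : X -> Prop) (g : X -> R) :
  (exists x, In x l /\ P x) -> exists x0, In x0 l /\ P x0 /\ forall x, In x l -> P x -> g x0 <= g x.
Proof. induction l; intros [x [Hx HP]]. contradiction.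
  destruct (classic (exists x, In x l /\ P x)) as [Hl|Hl].
  - destruct (IHl Hl) as [x0 [Hx0 [HP0 Hmin]]].
    destruct (classic (P a /\ g a <= g x0)) as [[Ha Hg]|Hn].
    + exists a. split. left; auto. split; auto. intros y [Hy|Hy] HPy. subst y; lra. specialize (Hmin y Hy HPy). lra.
    + exists x0. split. right; auto. split; auto. intros y [Hy|Hy] HPy; auto. subst y.
      apply Rnot_lt_le. intros Hlt. apply Hn. split; auto; lra.
  - destruct Hx as [Hx|Hx]. 2:{ exfalso; apply Hl; eauto. } subst x.
    exists a. split. left; auto. split; auto. intros y [Hy|Hy] HPy. subst y; lra. exfalso; apply Hl; eauto. Qed.

Section Move.
Variable N : nat.
Variable S : list (nat -> R).
Hypothesis HS : Forall (Rp N) S.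
Variable lam : nat -> R.
Hypothesis Hlam1 : forall x, in_P N S x -> dot N x lam <= 1.

Definition Zf (x : nat -> R) := forall n, (n < N)%nat -> freec S n -> x n = 0.
Definition inact (x : nat -> R) := length (filter (fun c => negb (act N x c)) (cstr N S)).

Lemma step_dir w x e : in_P N S x -> dot N x lam = 1 -> Zf x ->
  (forall c, In c (cstr N S) -> act N x c = true -> dot N (fst c) e = 0) ->
  dot N lam e = 0 -> (exists m, (m < N)%nat /\ e m <> 0) -> dot N w e <= 0 ->
  (forall n, (N <= n)%nat -> e n = 0) ->
  exists x', in_P N S x' /\ dot N x' lam = 1 /\ Zf x' /\ dot N w x' <= dot N w x /\ (inact x' < inact x)%nat.
Proof.
  intros Hx Hxl Hz E1 E2 [m [Hm Hem]] E4 E5.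
  assert (Hzero : forall n, (n < N)%nat -> freec S n -> e n = 0).
  { intros n Hn Hf. pose proof (Hz n Hn Hf).
    assert (act N x (cu n, 0) = true) by (apply act_true; simpl; rewrite dot_cu; auto; lra).
    pose proof (E1 _ (in_cons_coord N S n Hn) H0). simpl in H1. rewrite dot_cu in H1; auto. lra. }
  assert (F4 : exists c, In c (cstr N S) /\ 0 < dot N (fst c) e).
  { destruct (classic (exists k, (k < N)%nat /\ e k < 0)) as [[k [Hk Hek]]|Hno].
    - exists (cu k, 0). split. apply in_cons_coord; auto. simpl. rewrite dot_cu; auto. lra.
    - assert (Hnn : forall k, (k < N)%nat -> 0 <= e k).
      { intros k Hk. apply Rnot_lt_le. intros Hlt. apply Hno; eauto. }
      assert (Hpos : 0 < e m) by (pose proof (Hnn m Hm); lra).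
      destruct (classic (freec S m)) as [Hf|Hnf]. { pose proof (Hzero m Hm Hf). lra. }
      unfold freec in Hnf. apply not_all_ex_not in Hnf. destruct Hnf as [p Hp].
      apply imply_to_and in Hp. destruct Hp as [Hp Hpm].
      assert (HRp : Rp N p) by (rewrite Forall_forall in HS; auto).
      assert (0 < p m) by (pose proof (proj1 HRp m Hm); lra).
      exists (p, 1). split. apply in_cons_pi; auto. simpl.
      eapply Rlt_le_trans. 2:{ apply (sumR_ge_term (fun n => p n * e n) (seq 0 N) m). intros n Hn. apply in_seq in Hn.
        apply Rmult_le_pos. apply (proj1 HRp); lia. apply Hnn; lia. apply in_seq; lia. }
      simpl. apply Rmult_lt_0_compat; auto. }
  set (g := fun c : (nat -> R) * R => (snd c - dot N (fst c) x) / dot N (fst c) e).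
  destruct (list_argmin (cstr N S) (fun c => 0 < dot N (fst c) e) g F4) as [c0 [Hc0 [Hc0p Hmin]]].
  assert (Hcand : forall c, In c (cstr N S) -> 0 < dot N (fst c) e -> dot N (fst c) x < snd c).
  { intros c Hc Hp. pose proof (inP_cons N S x Hx c Hc). destruct H as [|He]; auto.
    pose proof (E1 c Hc ltac:(apply act_true; auto)). lra. }
  set (s := g c0).
  assert (Hs : 0 < s).
  { unfold s, g. pose proof (Hcand c0 Hc0 Hc0p). apply Rdiv_lt_0_compat; lra. }
  set (x' := fun n => x n + s * e n).
  exists x'. split; [|split; [|split; [|split]]].
  - apply cons_inP.
    + intros n Hn. unfold x'. rewrite (proj2 (proj1 Hx)), E5; auto. lra.
    + intros c Hc. unfold x'. rewrite dot_step. pose proof (inP_cons N S x Hx c Hc).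
      destruct (Rlt_dec 0 (dot N (fst c) e)) as [Hp|Hp].
      * assert (Hle : s <= g c) by (apply Hmin; auto).
        assert (Heq : g c * dot N (fst c) e = snd c - dot N (fst c) x) by (unfold g; field; lra).
        assert (s * dot N (fst c) e <= g c * dot N (fst c) e) by (apply Rmult_le_compat_r; lra).
        lra.
      * assert (s * dot N (fst c) e <= 0) by nra. lra.
  - unfold x'. rewrite dot_comm, dot_step, (dot_comm N lam x). rewrite Hxl, E2. lra.
  - intros n Hn Hf. unfold x'. rewrite (Hz n Hn Hf), (Hzero n Hn Hf). lra.
  - unfold x'. rewrite dot_step. assert (s * dot N w e <= 0) by nra. lra.
  - apply filter_lt with c0; auto.
    + intros c Hc. destruct (act N x c) eqn:Ea; simpl; auto.
      intros Hq. exfalso.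
      destruct (act N x' c) eqn:Eb; simpl in Hq; [discriminate|].
      apply act_false in Eb. apply Eb. unfold x'. rewrite dot_step.
      rewrite (E1 c Hc Ea). apply act_true in Ea. lra.
    + simpl. destruct (act N x c0) eqn:Ea; auto. apply act_true in Ea. pose proof (Hcand c0 Hc0 Hc0p). lra.
    + simpl. destruct (act N x' c0) eqn:Eb; auto. apply act_false in Eb. exfalso. apply Eb.
      unfold x'. rewrite dot_step. unfold s, g. field. lra.
Qed.
End Move.

Lemma step N S (HS : Forall (Rp N) S) lam (Hlam1 : forall x, in_P N S x -> dot N x lam <= 1) w x :
  in_P N S x -> dot N x lam = 1 -> Zf N S x -> ~ in_E N S x ->
  exists x', in_P N S x' /\ dot N x' lam = 1 /\ Zf N S x' /\ dot N w x' <= dot N w x /\ (inact N S x' < inact N S x)%nat.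
Proof.
  intros Hx Hxl Hz HnE.
  assert (exists a b t, in_P N S a /\ in_P N S b /\ 0 < t < 1 /\ (forall n, x n = t * a n + (1 - t) * b n) /\ a <> b)
    as [a [b [t [Ha [Hb [Ht [Hxi Hne]]]]]]].
  { apply NNPP. intros Hc. apply HnE. split; auto. intros a b t Ha Hb Ht Hxi.
    apply NNPP. intros Hne. apply Hc. exists a, b, t. auto. }
  set (d := fun n => a n - b n).
  assert (HdA : forall c, In c (cstr N S) -> act N x c = true -> dot N (fst c) d = 0).
  { intros c Hc Hact. apply act_true in Hact. destruct (active_conv N S x a b t c Ha Hb Ht Hxi Hc Hact).
    unfold d. rewrite dot_minus2. lra. }
  assert (Hdl : dot N lam d = 0).
  { pose proof (Hlam1 a Ha). pose proof (Hlam1 b Hb).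
    assert (t * dot N a lam + (1 - t) * dot N b lam = 1).
    { transitivity (dot N x lam); [|exact Hxl]. rewrite (dot_comm N a lam), (dot_comm N b lam), (dot_comm N x lam). rewrite <- dot_conv. apply dot_ext. intros; rewrite Hxi; auto. }
    destruct (conv_eq _ _ _ _ H H0 Ht H1). unfold d. rewrite dot_minus2, !(dot_comm N lam). lra. }
  destruct (vec_neq N a b (proj1 Ha) (proj1 Hb) Hne) as [m [Hm Hab]].
  set (sg := if Rle_dec (dot N w d) 0 then 1 else -1).
  apply (step_dir N S HS lam w x (fun n => sg * d n)); auto.
  - intros c Hc Hact. rewrite dot_scal2, (HdA c Hc Hact). lra.
  - rewrite dot_scal2, Hdl. lra.
  - exists m. split; auto. unfold d, sg. destruct (Rle_dec _ _); intros Hc; apply Hab; lra.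
  - rewrite dot_scal2. unfold sg. destruct (Rle_dec _ _); lra.
  - intros n Hn. unfold d. rewrite (proj2 (proj1 Ha)), (proj2 (proj1 Hb)); auto. lra.
Qed.

Lemma move N S (HS : Forall (Rp N) S) lam (Hlam1 : forall x, in_P N S x -> dot N x lam <= 1) w :
  forall k x, in_P N S x -> dot N x lam = 1 -> Zf N S x -> (inact N S x <= k)%nat ->
  exists v, in_E N S v /\ dot N v lam = 1 /\ dot N w v <= dot N w x.
Proof.
  induction k; intros x Hx Hxl Hz Hk; (destruct (classic (in_E N S x)) as [HE|HnE]; [exists x; split; auto; split; auto; lra|]);
  destruct (step N S HS lam Hlam1 w x Hx Hxl Hz HnE) as [x' [Hx' [Hx'l [Hz' [Hw Hlt]]]]].
  - lia.
  - destruct (IHk x' Hx' Hx'l Hz' ltac:(lia)) as [v [Hv [Hvl Hvw]]]. exists v. split; auto. split; auto. lra.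
Qed.

Lemma sum_exch N x (l : list (R * (nat -> R))) :
  dot N x (fun n => sumR (map (fun p => fst p * snd p n) l)) = sumR (map (fun p => fst p * dot N x (snd p)) l).
Proof. induction l; simpl.
  - unfold dot. rewrite (sumR_ext _ (fun _ => 0)). clear; induction (seq 0 N); simpl; lra. intros; lra.
  - rewrite <- IHl. replace (fst a * dot N x (snd a) + dot N x (fun n : nat => sumR (map (fun p : R * (nat -> R) => fst p * snd p n) l)))
    with (fst a * dot N x (snd a) + 1 * dot N x (fun n : nat => sumR (map (fun p : R * (nat -> R) => fst p * snd p n) l))) by ring.
    rewrite <- dot_lin2. apply dot_ext. intros; lra. Qed.

Lemma map_fst_combine {A B} (l : list A) (l' : list B) : length l = length l' -> map fst (combine l l') = l.
Proof. revert l'; induction l; destruct l'; simpl; intros; try lia; auto. rewrite IHl; auto. Qed.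

Lemma lam_bound N S lam x : in_Lambda N S lam -> in_P N S x -> dot N x lam <= 1.
Proof.
  intros [Hl [sg [[al [Hlen [Hnn [Hsum Hsg]]]] Hle]]] [[Hx Hx'] HxS].
  apply Rle_trans with (dot N x sg).
  { apply dot_le. intros n Hn. apply Rmult_le_compat_l; auto. }
  rewrite (dot_ext N x sg x (fun n => sumR (map (fun p => fst p * snd p n) (combine al S)))).
  2:{ intros n Hn. rewrite Hsg; auto. }
  rewrite sum_exch. rewrite <- Hsum. rewrite <- (map_fst_combine al S Hlen) at 2.
  apply sumR_le. intros p Hp.
  destruct p as [a pi]. simpl. apply in_combine_l in Hp as Ha. apply in_combine_r in Hp as Hpi.
  rewrite Forall_forall in Hnn. pose proof (Hnn a Ha). pose proof (HxS pi Hpi).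
  rewrite <- (Rmult_1_r a) at 2. apply Rmult_le_compat_l; auto. Qed.

Lemma dot_abs_bound N x y eps : (forall n, (n < N)%nat -> Rabs (y n) < eps) ->
  Rabs (dot N x y) <= sumR (map (fun n => Rabs (x n)) (seq 0 N)) * eps.
Proof. intros H. unfold dot. eapply Rle_trans. apply sumR_abs.
  rewrite Rmult_comm, <- sumR_scal. apply sumR_le. intros n Hn. apply in_seq in Hn.
  rewrite Rabs_mult. assert (Rabs (y n) < eps) by (apply H; lia). pose proof (Rabs_pos (x n)). pose proof (Rabs_pos (y n)). nra. Qed.

Lemma lift_exists N S f lam q
  (Hf_der : forall x, 0 <= x -> derivable_pt f x)
  (Hf_inc : forall x y, 0 <= x -> x < y -> f x < f y)
  (Hf0 : f 0 = 0) (Hq : Rp N q) :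
  unique_min (lift_feas N S lam q) (Lfun N f) (LiftDelta N S f lam q).
Proof.
  unfold LiftDelta. apply epsilon_spec.
  apply (exists_umin f Hf_der Hf_inc Hf0 N).
  - intros r [H _]; auto.
  - exists q. split; auto. split. intros; lra. intros; lra.
  - intros r1 r2 [H1 [H1x H1u]] [H2 [H2x H2u]]. split. apply Rp_mid; auto. split.
    + intros xi Hxi. unfold mid. specialize (H1x xi Hxi). specialize (H2x xi Hxi).
      rewrite (dot_ext N xi _ xi (fun n => (1/2) * r1 n + (1/2) * r2 n)) by (intros; field).
      rewrite dot_lin2. lra.
    + intros n Hn Hl. unfold mid. specialize (H1u n Hn Hl). specialize (H2u n Hn Hl). lra.
  - intros r Hr Happ. split; auto. split.
    + intros xi Hxi. apply Rnot_lt_ge. intros Hlt.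
      set (C := sumR (map (fun n => Rabs (xi n)) (seq 0 N)) + 1).
      assert (HC : 0 < C) by (unfold C; pose proof (sumR_nonneg (fun n => Rabs (xi n)) (seq 0 N) ltac:(intros; apply Rabs_pos)); lra).
      set (del := dot N xi q - dot N xi r).
      destruct (Happ (del / C) ltac:(apply Rdiv_lt_0_compat; unfold del; lra)) as [r' [[_ [Hr'x _]] Hclose]].
      specialize (Hr'x xi Hxi).
      pose proof (dot_abs_bound N xi (fun n => r n - r' n) (del / C) Hclose) as Hb.
      rewrite dot_minus2 in Hb. pose proof (Rle_abs (dot N xi r - dot N xi r')).
      assert ((C - 1) * (del / C) < del).
      { unfold del. apply Rmult_lt_reg_l with C; auto. field_simplify; [|lra].
        unfold del in *. nra. }
      assert (Hs : sumR (map (fun n : nat => Rabs (xi n)) (seq 0 N)) = C - 1) by (unfold C; ring).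
      rewrite Hs in Hb. pose proof (Rle_abs (- (dot N xi r - dot N xi r'))). rewrite Rabs_Ropp in H1.
      unfold del in *. lra.
    + intros n Hn Hl. apply Rnot_lt_le. intros Hlt.
      destruct (Happ (r n - q n) ltac:(lra)) as [r' [[_ [_ Hr'u]] Hclose]].
      specialize (Hr'u n Hn Hl). specialize (Hclose n Hn). apply Rabs_def2 in Hclose. lra.
Qed.

Theorem lemma5p6 (Nq : nat) (S : list (nat -> R)) (f : R -> R)
  (HS : Forall (Rp Nq) S)
  (Hf_der : forall x, 0 <= x -> derivable_pt f x)
  (Hf_inc : forall x y, 0 <= x -> x < y -> f x < f y)
  (Hf0 : f 0 = 0)
  (lam : nat -> R) (Hlam : in_Lambda Nq S lam)
  (q : nat -> R) (Hq : Rp Nq q) :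
  unique_min (plus_feas Nq S lam q) (Lfun Nq f) (LiftDelta Nq S f lam q).
Proof.
  rename Nq into N. set (D := LiftDelta N S f lam q).
  pose proof (lift_exists N S f lam q Hf_der Hf_inc Hf0 Hq) as [[HDp [HDx HDu]] HDmin].
  fold D in HDp, HDx, HDu, HDmin.
  assert (Hlam1 : forall x, in_P N S x -> dot N x lam <= 1) by (intros; eapply lam_bound; eauto).
  destruct Hlam as [Hlp Hlam'].
  split.
  -
    split; auto. intros xi [HE Hxl].
    destruct (exists_max N S xi HE) as [xi' [Hxi' Hv]].
    assert (Hge : dot N xi lam <= dot N xi' lam).
    { apply (Rle_trans _ _ _ (Req_le _ _ (dot_comm _ _ _))). rewrite (dot_comm N xi' lam).
      apply dot_le. intros n Hn. rewrite !(Rmult_comm (lam n)). apply Rmult_le_compat_r. apply (proj1 Hlp n Hn). apply Hv; auto. }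
    assert (Hxl' : dot N xi' lam = 1) by (pose proof (Hlam1 xi' (proj1 (proj1 Hxi'))); lra).
    pose proof (HDx xi' (conj Hxi' Hxl')) as H1.
    assert (Hz : sumR (map (fun n => (xi' n - xi n) * lam n) (seq 0 N)) = 0).
    { unfold dot in Hxl, Hxl'. rewrite (sumR_ext _ (fun n => xi' n * lam n - xi n * lam n)) by (intros; ring).
      rewrite sumR_minus. lra. }
    assert (Hz' := sumR_zero_each (fun n => (xi' n - xi n) * lam n) (seq 0 N) ltac:(intros n Hn; apply in_seq in Hn; apply Rmult_le_pos;
       [pose proof (Hv n ltac:(lia)); lra|apply (proj1 Hlp); lia]) Hz).
    assert (Hdiff : sumR (map (fun n => (xi' n - xi n) * (q n - D n)) (seq 0 N)) >= 0).
    { apply Rle_ge, sumR_nonneg. intros n Hn. pose proof (Hz' n Hn) as Hzn. apply in_seq in Hn.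
      pose proof (Hv n ltac:(lia)). destruct (Req_dec (xi' n) (xi n)) as [e|ne].
      rewrite e; lra. apply Rmult_integral in Hzn. destruct Hzn as [|Hl0]. lra.
      pose proof (HDu n ltac:(lia) Hl0). apply Rmult_le_pos; lra. }
    assert (Hid : dot N xi D - dot N xi q = (dot N xi' D - dot N xi' q) + sumR (map (fun n => (xi' n - xi n) * (q n - D n)) (seq 0 N))).
    { unfold dot. rewrite <- !sumR_minus, <- sumR_plus. apply sumR_ext. intros; ring. }
    lra.
  -
    intros r' [Hr'p Hr'x] Hne.
    set (T := fun n => (n < N)%nat /\ lam n = 0 /\ q n < r' n).
    set (r2 := fun n => if decP (T n) then q n else r' n).
    assert (HT : forall n, decP (T n) = true -> T n) by (intros n H; apply decP_true; auto).
    assert (HnT : forall n, decP (T n) = false -> ~ T n) by (intros n H; apply decP_false; auto).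
    assert (Hr2p : Rp N r2).
    { split; intros n Hn; unfold r2; destruct (decP (T n)) eqn:E.
      apply (proj1 Hq); auto. apply (proj1 Hr'p); auto.
      destruct (HT n E); lia. apply (proj2 Hr'p); auto. }
    assert (Hr2le : forall n, (n < N)%nat -> r2 n <= r' n).
    { intros n Hn; unfold r2; destruct (decP (T n)) eqn:E. destruct (HT n E) as [_ [_ ?]]; lra. lra. }
    assert (Hr2 : lift_feas N S lam q r2).
    { split; auto. split.
      - intros xi [[HE Hmax] Hxl].
        set (xt := fun n => if decP (T n) then 0 else xi n).
        destruct HE as [HP HE']. pose proof HP as [[HPn HPz] HPs].
        assert (HxtP : in_P N S xt).
        { split. split; intros n Hn; unfold xt; destruct (decP (T n)); try lra; auto.
          intros p Hp. eapply Rle_trans; [|apply (HPs p Hp)]. rewrite (dot_comm N xt), (dot_comm N xi).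
          apply dot_le. intros n Hn. assert (Rp N p) by (rewrite Forall_forall in HS; auto).
          pose proof (proj1 H n Hn). pose proof (HPn n Hn). unfold xt; destruct (decP (T n)); nra. }
        assert (Hxtl : dot N xt lam = 1).
        { rewrite <- Hxl. apply dot_ext. intros n Hn. unfold xt. destruct (decP (T n)) eqn:E; auto.
          destruct (HT n E) as [_ [-> _]]. ring. }
        assert (Hxtz : Zf N S xt).
        { intros n Hn Hf. unfold xt. destruct (decP (T n)); auto. apply (E_free N S xi); auto. split; auto. }
        destruct (move N S HS lam Hlam1 (fun n => r' n - q n) (inact N S xt) xt HxtP Hxtl Hxtz (le_n _))
          as [v [Hv [Hvl Hvw]]].
        pose proof (Hr'x v (conj Hv Hvl)).
        rewrite (dot_comm N _ v), (dot_comm N _ xt), !dot_minus2 in Hvw.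
        assert (dot N xi r2 - dot N xi q = dot N xt r' - dot N xt q).
        { unfold dot. rewrite <- !sumR_minus. apply sumR_ext. intros n _. unfold r2, xt. destruct (decP (T n)); ring. }
        lra.
      - intros n Hn Hl. unfold r2. destruct (decP (T n)) eqn:E. lra.
        apply Rnot_lt_le. intros Hlt. apply (HnT n E). split; auto. }
    assert (HL2 : Lfun N f r2 <= Lfun N f r').
    { destruct (classic (r2 = r')) as [->|Hn2]. lra. left. apply (L_mono_strict f Hf_der Hf_inc Hf0); auto. }
    destruct (classic (r2 = D)) as [He|Hn2].
    + assert (r2 <> r') by (intros E; apply Hne; rewrite <- E; auto).
      rewrite <- He. apply (L_mono_strict f Hf_der Hf_inc Hf0); auto.
    + pose proof (HDmin r2 Hr2 Hn2). lra.
Qed.
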